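(* Consider $N$ advertisers, advertiser $i$ having click-through rate $c_i\in(0,1]$, abandonment probability $\gamma_i\ge 0$ with $\mu_i=c_i+\gamma_i\le 1$, and private value per click $v_i\ge 0$; index them so that $\frac{c_1v_1}{\mu_1}\ge\frac{c_2v_2}{\mu_2}\ge\dots\ge\frac{c_Nv_N}{\mu_N}$. Define bids recursively from the bottom by $b_{N+1}=0$ (so the term $\frac{b_{N+1}c_{N+1}}{\mu_{N+1}}$ is $0$) and $$b_i=\frac{\mu_i}{c_i}\Big[v_ic_i+(1-\mu_i)\frac{b_{i+1}c_{i+1}}{\mu_{i+1}}\Big],\qquad i=N,\dots,1.$$ Then, in the CE mechanism, this bid profile is an envy-free pure-strategy Nash equilibrium: no advertiser can increase its expected payoff by unilaterally changing its bid (in particular by moving to any other position). Moreover, at this equilibrium the resulting ranking is socially optimal (it maximizes the total expected value $\sum_{\text{positions }k} v_{(k)}\,c_{(k)}\prod_{l<k}(1-\mu_{(l)})$ over all orderings of the advertisers) and is also optimal for the search engine for the resulting per-click prices (it maximizes $\sum_k p_{(k)}c_{(k)}\prod_{l<k}(1-\mu_{(l)})$ over all orderings with these prices).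
   Context: Click model: users view ads top to bottom; having viewed the ad at position $k$ the user clicks it with probability $c$ of that ad, abandons with probability $\gamma$ of that ad, and otherwise moves on. Thus if ads are placed in order $(1),\dots,(N)$, the ad at position $k$ is clicked with probability $c_{(k)}\prod_{l<k}(1-\mu_{(l)})$. CE mechanism: given bids $b$, with $w=c/\mu$, ads are ranked in descending order of $wb$, and the ad at position $i$ pays per click $p_i=\frac{w_{i+1}b_{i+1}}{w_i}=\frac{b_{i+1}c_{i+1}\mu_i}{\mu_{i+1}c_i}$, where $i+1$ denotes the ad immediately below it (the bottom ad pays $0$). An advertiser's expected payoff is $(v-p)$ times its click probability; the search engine's expected profit is the sum over ads of price per click times click probability. *)

(* Defs.v *)
From mathcomp Require Import all_boot all_order all_algebra all_fingroup.
Set Implicit Arguments. Unset Strict Implicit. Unset Printing Implicit Defensive.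
Import Order.TTheory GRing.Theory Num.Theory.
Local Open Scope ring_scope.

(* Advertisers are 'I_N; a ranking is a permutation s : 'S_N where
   s k is the advertiser placed at position k (position 0 = top).
   c = click-through rates, mu = c + gamma, v = values, b = bids. *)

Section Click.
Variables (R : realFieldType) (N : nat).
Implicit Types (c mu v b p : 'I_N -> R) (s : 'S_N).

Definition wgt c mu (i : 'I_N) : R := c i / mu i.
Definition wbid c mu b (i : 'I_N) : R := wgt c mu i * b i.

Definition next_term c mu b (i : 'I_N) : R :=
  if (insub i.+1 : option 'I_N) is Some j then b j * c j / mu j else 0.

Definition reach mu s (k : 'I_N) : R :=
  \prod_(l : 'I_N | (l < k)%N) (1 - mu (s l)).

Definition clickp c mu s (k : 'I_N) : R := c (s k) * reach mu s k.

Definition ce_price c mu b s (k : 'I_N) : R :=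
  if omap s (insub k.+1 : option 'I_N) is Some j
  then wbid c mu b j / wgt c mu (s k) else 0.

Definition payoff c mu v b s (i : 'I_N) : R :=
  let k := (s^-1 i)%g in (v i - ce_price c mu b s k) * clickp c mu s k.

Definition is_ce_rank c mu b s : Prop :=
  forall k1 k2 : 'I_N, (k1 < k2)%N ->
    wbid c mu b (s k2) < wbid c mu b (s k1) \/
    (wbid c mu b (s k2) = wbid c mu b (s k1) /\ (s k1 < s k2)%N).

Definition upd b (i : 'I_N) (x : R) : 'I_N -> R :=
  fun j => if j == i then x else b j.

Definition welfare c mu v s : R := \sum_(k : 'I_N) v (s k) * clickp c mu s k.

Definition revenue c mu p s : R := \sum_(k : 'I_N) p (s k) * clickp c mu s k.

End Click.

(* Main.v *)
Require Import Defs.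
From mathcomp Require Import all_boot all_order all_algebra all_fingroup.
From mathcomp Require Import zify ring lra.
Import Order.TTheory GRing.Theory Num.Theory.

Local Open Scope ring_scope.

Lemma reach_S (R : realFieldType) (N : nat) (mu : 'I_N -> R) (s : 'S_N)
  (k k' : 'I_N) : nat_of_ord k' = k.+1 ->
  reach mu s k' = reach mu s k * (1 - mu (s k)).
Proof.
move=> hk; rewrite /reach (bigD1 k) /=; last by rewrite hk ltnSn.
rewrite mulrC; congr (_ * _); apply: eq_bigl => l.
by rewrite hk ltnS -val_eqE /= [(l < k)%N]ltn_neqAle andbC.
Qed.

Lemma reach_tperm_other (R : realFieldType) (N : nat) (mu : 'I_N -> R)
  (s : 'S_N) (k k' x : 'I_N) : nat_of_ord k' = k.+1 -> x != k -> x != k' ->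
  reach mu (tperm k k' * s)%g x = reach mu s x.
Proof.
move=> hk hxk hxk'; rewrite /reach.
rewrite (reindex_inj (h := tperm k k') (@perm_inj _ (tperm k k'))) /=.
apply: eq_big => l; last by move=> _; rewrite permM tpermK.
move: hxk hxk'; rewrite -!val_eqE /= hk => hxk hxk'.
case: tpermP => [->|->|//]; rewrite ?hk; lia.
Qed.

Lemma reach_tperm_k (R : realFieldType) (N : nat) (mu : 'I_N -> R)
  (s : 'S_N) (k k' : 'I_N) : nat_of_ord k' = k.+1 ->
  reach mu (tperm k k' * s)%g k = reach mu s k.
Proof.
move=> hk; rewrite /reach; apply: eq_bigr => l hl; rewrite permM.
case: tpermP => // [e|e]; move: hl; rewrite e ?hk; lia.
Qed.

Lemma sum_split (R : realFieldType) (N : nat) (F : 'I_N -> R) (k k' : 'I_N) :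
  k != k' -> \sum_x F x = F k + F k' + \sum_(x | (x != k) && (x != k')) F x.
Proof.
move=> hkk; rewrite (bigD1 k) // (bigD1 k') /=; last by rewrite eq_sym.
by rewrite addrA.
Qed.

Lemma swap_gain (R : realFieldType) (N : nat) (c mu u : 'I_N -> R)
  (hmu : forall j, 0 <= mu j <= 1)
  (hdec : forall i j : 'I_N, (i <= j)%N -> mu i * (c j * u j) <= mu j * (c i * u i))
  (s : 'S_N) (k k' : 'I_N) : nat_of_ord k' = k.+1 -> (s k' < s k)%N ->
  welfare c mu u s <= welfare c mu u (tperm k k' * s)%g.
Proof.
move=> hk hs.
have hkk : k != k' by rewrite -val_eqE /= hk; lia.
rewrite /welfare (@sum_split _ _ _ k k' hkk) [X in _ <= X](@sum_split _ _ _ k k' hkk).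
have -> : \sum_(x | (x != k) && (x != k'))
    u ((tperm k k' * s)%g x) * clickp c mu (tperm k k' * s)%g x =
  \sum_(x | (x != k) && (x != k')) u (s x) * clickp c mu s x.
  apply: eq_bigr => x /andP[h1 h2].
  rewrite /clickp (@reach_tperm_other _ _ mu s k k' x hk) // permM tpermD // eq_sym //.
rewrite lerD2r /clickp !permM tpermL tpermR.
rewrite (@reach_S _ _ mu s _ _ hk) (@reach_S _ _ mu (tperm k k' * s)%g _ _ hk) (@reach_tperm_k _ _ mu s _ _ hk) //.
rewrite permM tpermL.
set r := reach mu s k.
have r0 : 0 <= r by apply: prodr_ge0 => l _; have := hmu (s l); lra.
have := hdec (s k') (s k) (ltnW hs).
set x := s k; set y := s k'.
move=> h; rewrite -subr_ge0.
have -> : u y * (c y * r) + u x * (c x * (r * (1 - mu y))) -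
   (u x * (c x * r) + u y * (c y * (r * (1 - mu x)))) =
   r * (mu x * (c y * u y) - mu y * (c x * u x)) by ring.
by apply: mulr_ge0 => //; rewrite subr_ge0.
Qed.

Lemma no_descent_id (N : nat) (s : 'S_N) :
  (forall k k' : 'I_N, nat_of_ord k' = k.+1 -> (s k < s k')%N) -> s = 1%g.
Proof.
move=> h.
have inc : forall d (k1 k2 : 'I_N), nat_of_ord k2 = (k1 + d.+1)%N -> (s k1 < s k2)%N.
  elim=> [|d IH] k1 k2 e; first by apply: h; rewrite e addn1.
  have hm : (k1 + d.+1 < N)%N by have := ltn_ord k2; lia.
  have e2 : nat_of_ord k2 = (Ordinal hm).+1 by rewrite /=; move: e; rewrite /=; lia.
  have := IH k1 (Ordinal hm) erefl.
  have := h (Ordinal hm) k2 e2. lia.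
have lo : forall n (k : 'I_N), nat_of_ord k = n -> (n <= s k)%N.
  elim=> [//|n IH] k e.
  have hm : (n < N)%N by have := ltn_ord k; lia.
  have := IH (Ordinal hm) erefl; have := h (Ordinal hm) k e; lia.
have hi : forall n (k : 'I_N), (nat_of_ord k + n = N.-1)%N -> (s k <= k)%N.
  elim=> [|n IH] k e; first by have := ltn_ord (s k); lia.
  have hm : (k.+1 < N)%N by have := ltn_ord k; lia.
  have := IH (Ordinal hm) ltac:(rewrite /=; lia).
  have := h k (Ordinal hm) erefl; rewrite /=; lia.
apply/permP => k; rewrite perm1; apply/val_inj => /=.
have := lo k k erefl; have := hi (N.-1 - k)%N k ltac:(have := ltn_ord k; lia).
lia.
Qed.

Lemma sum_splitn (N : nat) (F : 'I_N -> nat) (k k' : 'I_N) :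
  k != k' -> (\sum_x F x = F k + F k' + \sum_(x | (x != k) && (x != k')) F x)%N.
Proof.
move=> hkk; rewrite (bigD1 k) // (bigD1 k') /=; last by rewrite eq_sym.
by rewrite addnA.
Qed.

Definition Mes (N : nat) (s : 'S_N) : nat := \sum_(k : 'I_N) (k * (N - s k))%N.
Arguments Mes {N} s.

Lemma Mes_swap (N : nat) (s : 'S_N) (k k' : 'I_N) : nat_of_ord k' = k.+1 ->
  (s k' < s k)%N -> (Mes (tperm k k' * s)%g < Mes s)%N.
Proof.
move=> hk hs.
have hkk : k != k' by rewrite -val_eqE /= hk; lia.
rewrite /Mes (@sum_splitn _ _ k k' hkk) [X in (_ < X)%N](@sum_splitn _ _ k k' hkk).
rewrite !permM tpermL tpermR.
have -> : (\sum_(x | (x != k) && (x != k')) (x * (N - (tperm k k' * s)%g x)) =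
  \sum_(x | (x != k) && (x != k')) (x * (N - s x)))%N.
  by apply: eq_bigr => x /andP[h1 h2]; rewrite permM tpermD // eq_sym.
have := ltn_ord (s k); have := ltn_ord (s k'); rewrite hk !mulSn; lia.
Qed.

Lemma opt_order (R : realFieldType) (N : nat) (c mu u : 'I_N -> R)
  (hmu : forall j, 0 <= mu j <= 1)
  (hdec : forall i j : 'I_N, (i <= j)%N -> mu i * (c j * u j) <= mu j * (c i * u i))
  (s : 'S_N) : welfare c mu u s <= welfare c mu u 1%g.
Proof.
suff : forall n (s : 'S_N), (Mes s < n)%N -> welfare c mu u s <= welfare c mu u 1%g.
  by apply; apply: ltnSn.
elim=> [//|n IH] t ht.
have [->|ne] := eqVneq t 1%g; first by [].
case: (boolP [exists k : 'I_N, [exists k' : 'I_N,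
    (nat_of_ord k' == k.+1) && (t k' < t k)%N]]); last first.
  rewrite negb_exists => /forallP hn; move/eqP: ne; case.
  apply: no_descent_id => k k' hk.
  have := hn k; rewrite negb_exists => /forallP /(_ k').
  rewrite hk eqxx /= -leqNgt leq_eqVlt => /orP[/eqP e|//].
  by move/val_inj/perm_inj: e => e; move: hk; rewrite e; lia.
move/existsP => [k /existsP [k' /andP [/eqP hk hd]]].
apply: le_trans (@swap_gain _ _ c mu u hmu hdec t k k' hk hd) _.
apply: IH; have := @Mes_swap _ t k k' hk hd; lia.
Qed.

Local Close Scope ring_scope.
Lemma cnt_lt (N : nat) (x : nat) : (x <= N)%N ->
  (\sum_(j : 'I_N | (j < x)%N) 1 = x)%N.
Proof.
move=> hx; rewrite (eq_bigl (fun j : 'I_N => xpredT j && (j < x)%N)) // (big_ord_narrow_cond hx) /=.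
by rewrite sum1_card card_ord.
Qed.

Lemma cnt_lt_ne (N : nat) (x y : 'I_N) :
  (\sum_(j : 'I_N | (j < x)%N && (j != y)) 1 = x - (y < x))%N.
Proof.
have hx : (x <= N)%N by apply: ltnW.
have e := @cnt_lt N x hx.
case: (ltnP y x) => hy.
  rewrite (bigD1 y) /= in e; last by [].
  by rewrite /= -[in RHS]e addKn.
rewrite /= subn0 -[in RHS]e; apply: eq_bigl => j.
case: (eqVneq j y) => [->|]; last by rewrite andbT.
by rewrite andbF ltnNge hy.
Qed.

Lemma pos_char (N : nat) (s : 'S_N) (i : 'I_N)
  (hord : forall j1 j2 : 'I_N, j1 != i -> j2 != i ->
     ((s^-1 j1)%g < (s^-1 j2)%g)%N = (j1 < j2)%N)
  (l : 'I_N) : l != (s^-1 i)%g ->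
  (nat_of_ord (s l) = l - ((s^-1 i)%g < l) + (i < s l))%N.
Proof.
move=> hl.
have hsl : s l != i by apply: contra hl => /eqP <-; rewrite permK.
have e1 := @cnt_lt_ne N (s l) i.
have e2 := @cnt_lt_ne N l (s^-1 i)%g.
have e3 : (\sum_(j : 'I_N | (j < s l)%N && (j != i)) 1 =
           \sum_(j : 'I_N | (j < l)%N && (j != (s^-1 i)%g)) 1)%N.
  rewrite (reindex_inj (@perm_inj _ s)); apply: eq_bigl => l'.
  case: (eqVneq l' (s^-1 i)%g) => [->|hne]; first by rewrite permKV !eqxx !andbF.
  have hsl' : s l' != i by apply: contra hne => /eqP <-; rewrite permK.
  by rewrite hsl' -(hord _ _ hsl' hsl) !permK !andbT.
have := ltn_ord (s l); have := ltn_ord i; have := ltn_ord l.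
move: e1 e2 e3; case: (ltnP i (s l)); case: (ltnP (s^-1 i)%g l); lia.
Qed.

Local Open Scope ring_scope.

Lemma main_facts (R : realFieldType) (N : nat) (c mu v b : 'I_N -> R)
  (hc : forall j, 0 < c j) (hm0 : forall j, 0 < mu j) (hm1 : forall j, mu j <= 1)
  (hv : forall j, 0 <= v j)
  (hsort : forall i j : 'I_N, (i <= j)%N -> c j * v j / mu j <= c i * v i / mu i)
  (hb : forall i, b i = mu i / c i * (v i * c i + (1 - mu i) * next_term c mu b i)) :
  is_ce_rank c mu b 1%g /\
  (forall (i : 'I_N) (x : R) (s : 'S_N), 0 <= x ->
     is_ce_rank c mu (upd b i x) s ->
     payoff c mu v (upd b i x) s i <= payoff c mu v b 1%g i) /\
  (forall (i : 'I_N) (s : 'S_N),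
     (forall j1 j2 : 'I_N, j1 != i -> j2 != i ->
        ((s^-1 j1)%g < (s^-1 j2)%g)%N = (j1 < j2)%N) ->
     payoff c mu v b s i <= payoff c mu v b 1%g i) /\
  (forall s : 'S_N, welfare c mu v s <= welfare c mu v 1%g) /\
  (forall s : 'S_N,
     revenue c mu (fun j => ce_price c mu b 1%g j) s
       <= revenue c mu (fun j => ce_price c mu b 1%g j) 1%g).
Proof.
pose a j := c j * v j / mu j.
pose W j := wbid c mu b j.
pose Wn (n : nat) := if (insub n : option 'I_N) is Some j then W j else 0.
have hcne : forall j, c j != 0 by move=> j; rewrite gt_eqF.
have hmne : forall j, mu j != 0 by move=> j; rewrite gt_eqF.
have ha0 : forall j, 0 <= a j.
  move=> j; rewrite /a; apply: divr_ge0; last exact: ltW.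
  by apply: mulr_ge0; [exact: ltW|].
have hamon : forall i j : 'I_N, (i <= j)%N -> a j <= a i by move=> *; exact: hsort.
have hcv : forall j, c j * v j = mu j * a j.
  by move=> j; rewrite /a; field; exact: hmne.
have hNT : forall j, next_term c mu b j = Wn j.+1.
  move=> j; rewrite /next_term /Wn; case: insub => // j'.
  by rewrite /W /wbid /wgt; ring.
have hWo : forall j : 'I_N, Wn j = W j by move=> j; rewrite /Wn valK.
have hW : forall j, W j = mu j * a j + (1 - mu j) * Wn j.+1.
  move=> j; rewrite /W /wbid /wgt hb -hNT -hcv.
  by field; apply/andP; split.
have hG : forall j : 'I_N, 0 <= Wn j.+1 <= a j.
  suff : forall d (j : 'I_N), (N - j <= d)%N -> 0 <= Wn j.+1 <= a j.
    by move=> h j; apply: (h N); apply: leq_subr.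
  elim=> [|d IH] j hd; first by have := ltn_ord j; lia.
  rewrite /Wn; case: insubP => [j' hj' ej'|_]; last by rewrite lexx ha0.
  rewrite -/(W j') hW.
  have := IH j' ltac:(rewrite ej'; lia).
  have := hamon j j' ltac:(rewrite ej'; lia).
  have := hm0 j'; have := hm1 j'; have := ha0 j'.
  move=> *; apply/andP; split; nra.
have hWn0 : forall n, 0 <= Wn n.
  move=> n; rewrite /Wn; case: insubP => // j _ _; rewrite hW.
  have /andP[? ?] := hG j; have := hm0 j; have := hm1 j; have := ha0 j; move=> *; nra.
have hWstep : forall n, Wn n.+1 <= Wn n.
  move=> n; rewrite {2}/Wn; case: insubP => [j _ ej|hn].
    rewrite -ej hW; have /andP[? ?] := hG j; have := hm0 j; have := hm1 j; move=> *; nra.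
  rewrite /Wn; case: insubP => // j _ ej; move: hn ej; rewrite /=; have := ltn_ord j; lia.
have hWmon : forall n m, (n <= m)%N -> Wn m <= Wn n.
  move=> n m /subnK <-; elim: (m - n)%N => [|d IH]; first by rewrite add0n.
  by rewrite addSn; apply: le_trans (hWstep _) IH.
pose P (m : nat) := \prod_(j : 'I_N | (j < m)%N) (1 - mu j).
pose Q (i : 'I_N) (m : nat) := \prod_(j : 'I_N | (j < m.+1)%N && (j != i)) (1 - mu j).
have hPS : forall ko : 'I_N, P ko.+1 = P ko * (1 - mu ko).
  move=> ko; rewrite /P (bigD1 ko) /=; last by lia.
  rewrite mulrC; congr (_ * _); apply: eq_bigl => l.
  rewrite -!val_eqE /=; lia.
have hQS : forall (i ko' ko : 'I_N), nat_of_ord ko = ko'.+1 -> ko != i ->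
    Q i ko = Q i ko' * (1 - mu ko).
  move=> i ko' ko ek hki; rewrite /Q (bigD1 ko) /=; last by rewrite hki; lia.
  rewrite mulrC; congr (_ * _); apply: eq_bigl => l.
  move: hki; rewrite -!val_eqE /= ek; lia.
have hQi : forall i : 'I_N, Q i i = P i.
  move=> i; rewrite /Q /P; apply: eq_bigl => l.
  rewrite -!val_eqE /=; lia.
have hP0 : forall m, 0 <= P m.
  by move=> m; apply: prodr_ge0 => l _; have := hm1 l; lra.
have hQ0 : forall i m, 0 <= Q i m.
  by move=> i m; apply: prodr_ge0 => l _; have := hm1 l; lra.
have hA : forall (i : 'I_N) d (ko : 'I_N), (ko + d = i)%N ->
    (a i - Wn ko) * P ko <= (a i - Wn i.+1) * P i.
  move=> i; elim=> [|d IH] ko e.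
    have -> : ko = i by apply/val_inj; rewrite /= -e addn0.
    rewrite hWo hW; apply: ler_wpM2r => //.
    have /andP[? ?] := hG i; have := hm0 i; move=> *; nra.
  have hk1 : (ko.+1 < N)%N by have := ltn_ord i; lia.
  apply: le_trans (IH (Ordinal hk1) ltac:(rewrite /=; lia)).
  rewrite /= (hPS ko) hWo.
  have -> : (a i - Wn ko.+1) * (P ko * (1 - mu ko)) =
    ((a i - Wn ko.+1) * (1 - mu ko)) * P ko by ring.
  rewrite hW; apply: ler_wpM2r => //.
  have := hamon ko i ltac:(lia); have := hm0 ko; have := hm1 ko.
  move=> *; nra.
have hB : forall (i : 'I_N) d (ko : 'I_N), (i + d = ko)%N ->
    (a i - Wn ko.+1) * Q i ko <= (a i - Wn i.+1) * P i.
  move=> i; elim=> [|d IH] ko e.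
    have -> : ko = i by apply/val_inj; rewrite /= -e addn0.
    by rewrite hQi.
  have hk1 : (ko.-1 < N)%N by have := ltn_ord ko; lia.
  have ek : nat_of_ord ko = (Ordinal hk1).+1 by rewrite /=; lia.
  apply: le_trans (IH (Ordinal hk1) ltac:(rewrite /=; lia)).
  rewrite (hQS i (Ordinal hk1) ko ek ltac:(rewrite -val_eqE /=; lia)).
  have -> : Wn (Ordinal hk1).+1 = W ko by rewrite -ek hWo.
  have -> : (a i - Wn ko.+1) * (Q i (Ordinal hk1) * (1 - mu ko)) =
    ((a i - Wn ko.+1) * (1 - mu ko)) * Q i (Ordinal hk1) by ring.
  rewrite hW; apply: ler_wpM2r => //.
  have := hamon i ko ltac:(lia); have := hm0 ko; have := hm1 ko.
  move=> *; nra.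
have hpay : forall (s : 'S_N) (i : 'I_N),
   (forall j1 j2 : 'I_N, j1 != i -> j2 != i ->
        ((s^-1 j1)%g < (s^-1 j2)%g)%N = (j1 < j2)%N) ->
   payoff c mu v b s i = mu i * ((a i - (if ((s^-1 i)%g < i)%N then Wn (s^-1 i)%g
        else Wn (s^-1 i)%g.+1)) *
        (if ((s^-1 i)%g <= i)%N then P (s^-1 i)%g else Q i (s^-1 i)%g)).
  move=> s i hord.
  have hPC := @pos_char N s i hord.
  have hsk : s (s^-1 i)%g = i by rewrite permKV.
  have hinv : forall j, j != i -> (s^-1 j)%g != (s^-1 i)%g.
    by move=> j hji; apply: contra hji => /eqP e; rewrite -(permKV s j) e hsk.
  rewrite /payoff /clickp hsk.
  have hprod : \prod_(l : 'I_N | (l < (s^-1 i)%g)%N) (1 - mu (s l)) =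
      \prod_(j : 'I_N | ((s^-1 j)%g < (s^-1 i)%g)%N) (1 - mu j).
    by rewrite [RHS](reindex_inj (@perm_inj _ s)); apply: eq_bigl => l; rewrite /= permK.
  set k := (s^-1 i)%g in hPC hsk hinv hprod *.
  have hr : reach mu s k = (if (k <= i)%N then P k else Q i k).
    rewrite /reach hprod.
    case: ifP => hki; [rewrite /P | rewrite /Q]; apply: eq_bigl => j;
      (case: (eqVneq j i) => [->|hji]; [rewrite -/k ?eqxx ?andbF; move: hki; lia|]);
      have E := hPC _ (hinv j hji); rewrite permKV in E;
      move: E hki hji; rewrite -?val_eqE /=; lia.
  have hp : (v i - ce_price c mu b s k) * c i =
      mu i * (a i - (if (k < i)%N then Wn k else Wn k.+1)).
    rewrite /ce_price; case: insubP => [p _ ep|hn] /=.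
      have hpk : p != k by rewrite -val_eqE /= ep; lia.
      have hspi : s p != i by apply: contra hpk => /eqP e; rewrite /k -e permK.
      have E := hPC _ hpk.
      have hsp : nat_of_ord (s p) = if (k < i)%N then nat_of_ord k else k.+1.
        move: E ep hspi; rewrite -val_eqE /=; case: ifP; lia.
      have -> : wbid c mu b (s p) = Wn (s p) by rewrite hWo.
      rewrite hsp hsk -fun_if /wgt /a; field; apply/andP; split; [exact: hmne|exact: hcne].
    have hX : (if (k < i)%N then Wn k else Wn k.+1) = 0.
      case: ifP => hki; first by move: hn; have := ltn_ord i; lia.
      by rewrite /Wn insubF //; apply: negbTE.
    rewrite hX subr0 /a; field; exact: hmne.
  by rewrite mulrA hp hr mulrA.
have hWm : forall j1 j2 : 'I_N, (j1 <= j2)%N -> W j2 <= W j1.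
  by move=> j1 j2 h; rewrite -!hWo; apply: hWmon.
have hmu01 : forall j, 0 <= mu j <= 1.
  by move=> j; rewrite hm1 andbT ltW.
have henvy : forall (i : 'I_N) (s : 'S_N),
     (forall j1 j2 : 'I_N, j1 != i -> j2 != i ->
        ((s^-1 j1)%g < (s^-1 j2)%g)%N = (j1 < j2)%N) ->
     payoff c mu v b s i <= payoff c mu v b 1%g i.
  move=> i s hord.
  have hord1 : forall j1 j2 : 'I_N, j1 != i -> j2 != i ->
        (((1 : 'S_N)^-1 j1)%g < ((1 : 'S_N)^-1 j2)%g)%N = (j1 < j2)%N.
    by move=> j1 j2 _ _; rewrite invg1 !perm1.
  rewrite (hpay s i hord) (hpay 1%g i hord1) invg1 perm1 ltnn leqnn.
  apply: ler_wpM2l; first exact: ltW.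
  case: (ltngtP (s^-1 i)%g i) => h.
  - by apply: (hA i (i - (s^-1 i)%g)%N); lia.
  - by apply: (hB i ((s^-1 i)%g - i)%N); lia.
  - by have -> : (s^-1 i)%g = i by apply: val_inj.
split.
  move=> k1 k2 hk; rewrite !perm1.
  have := hWm _ _ (ltnW hk); rewrite le_eqVlt => /orP[/eqP e|h].
    by right; split.
  by left.
split.
  move=> i x s _ hce.
  have hW' : forall j, j != i -> wbid c mu (upd b i x) j = W j.
    by move=> j hj; rewrite /wbid /upd (negbTE hj).
  have hinc : forall l1 l2 : 'I_N, (l1 < l2)%N -> s l1 != i -> s l2 != i ->
      (s l1 < s l2)%N.
    move=> l1 l2 hl h1 h2.
    case: (ltngtP (s l1) (s l2)) => // hlt.
      have := hWm _ _ (ltnW hlt).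
      case: (hce l1 l2 hl) => [h|[_ h]] H; last by move: h hlt; lia.
      by move: h; rewrite !hW' // => h; have := lt_le_trans h H; rewrite ltxx.
    by move/val_inj/perm_inj: hlt => e; move: hl; rewrite e ltnn.
  have hord : forall j1 j2 : 'I_N, j1 != i -> j2 != i ->
        ((s^-1 j1)%g < (s^-1 j2)%g)%N = (j1 < j2)%N.
    move=> j1 j2 h1 h2.
    case: (ltngtP (s^-1 j1)%g (s^-1 j2)%g) => hl.
    - by have := hinc _ _ hl; rewrite !permKV => ->.
    - by have := hinc _ _ hl; rewrite !permKV => /(_ h2 h1) h; apply/esym/negbTE; rewrite -leqNgt ltnW.
    - by move/val_inj: hl => /(congr1 s); rewrite !permKV => ->; rewrite ltnn.
  apply: le_trans (henvy i s hord).
  rewrite /payoff /ce_price; case: insubP => // p _ ep /=.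
  have hspi : s p != i.
    by apply/eqP => e; move: ep; rewrite -e permK /=; lia.
  by rewrite hW'.
split; first exact: henvy.
split.
  move=> s; apply: opt_order => // i j hij.
  rewrite !hcv.
  have -> : mu i * (mu j * a j) = (mu i * mu j) * a j by ring.
  have -> : mu j * (mu i * a i) = (mu i * mu j) * a i by ring.
  apply: ler_wpM2l; last exact: hamon.
  by apply: mulr_ge0; apply: ltW.
move=> s; apply: opt_order => // i j hij.
have hcu : forall j, c j * ce_price c mu b 1%g j = mu j * Wn j.+1.
  move=> j'; rewrite /ce_price /Wn; case: insubP => [p _ ep|hn] /=; last by rewrite !mulr0.
  rewrite !perm1 /wgt /W; field; apply/andP; split; [exact: hmne|exact: hcne].
rewrite !hcu.
have -> : mu i * (mu j * Wn j.+1) = (mu i * mu j) * Wn j.+1 by ring.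
have -> : mu j * (mu i * Wn i.+1) = (mu i * mu j) * Wn i.+1 by ring.
apply: ler_wpM2l; last by apply: hWmon.
by apply: mulr_ge0; apply: ltW.
Qed.

Theorem theorem3 (R : realFieldType) (N : nat) (c g v b : 'I_N -> R)
  (hc : forall i, 0 < c i /\ c i <= 1)
  (hg : forall i, 0 <= g i)
  (hmu : forall i, c i + g i <= 1)
  (hv : forall i, 0 <= v i)
  (hsort : forall i j : 'I_N, (i <= j)%N ->
     c j * v j / (c j + g j) <= c i * v i / (c i + g i))
  (hb : forall i, b i = (c i + g i) / c i *
     (v i * c i + (1 - (c i + g i)) * next_term c (fun j => c j + g j) b i)) :
  let mu := fun j => c j + g j in
  (* the resulting CE ranking is the indexing order *)
  is_ce_rank c mu b 1%g /\
  (* pure-strategy Nash equilibrium: no profitable unilateral bid change *)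
  (forall (i : 'I_N) (x : R) (s : 'S_N), 0 <= x ->
     is_ce_rank c mu (upd b i x) s ->
     payoff c mu v (upd b i x) s i <= payoff c mu v b 1%g i) /\
  (* envy-free: moving to any other position (others keep their order),
     paying the CE price there, is not profitable *)
  (forall (i : 'I_N) (s : 'S_N),
     (forall j1 j2 : 'I_N, j1 != i -> j2 != i ->
        ((s^-1 j1)%g < (s^-1 j2)%g)%N = (j1 < j2)%N) ->
     payoff c mu v b s i <= payoff c mu v b 1%g i) /\
  (* socially optimal ranking *)
  (forall s : 'S_N, welfare c mu v s <= welfare c mu v 1%g) /\
  (* optimal for the search engine at the resulting per-click prices *)
  (forall s : 'S_N,
     revenue c mu (fun j => ce_price c mu b 1%g j) s
       <= revenue c mu (fun j => ce_price c mu b 1%g j) 1%g).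
Proof.
move=> mu.
apply: (@main_facts R N c mu v b).
- by move=> j; case: (hc j).
- by move=> j; rewrite /mu; have := hg j; case: (hc j) => h1 _; lra.
- exact: hmu.
- exact: hv.
- exact: hsort.
- exact: hb.
Qed.
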